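(* For every $\varepsilon\in(0,1]$ there exists $b_0$ such that for every $b\geq b_0$ there exists $n_0$ such that for every $n\geq n_0$ the following holds. Let $G$ be an $(n,\varepsilon)$-digraph and let $\mathbf{m}$ be a perfect fractional matching of $G$ with $h(\mathbf{m})\geq n\log\frac n2+\varepsilon n$. Then there is a $b$-normal perfect fractional matching $\mathbf{x}$ of $G$ with $h(\mathbf{x})\geq h(\mathbf{m})-\varepsilon n$.
   Context: $\log=\log_2$. Digraphs have no loops and at most one edge from $v$ to $w$ per ordered pair. An $(n,\varepsilon)$-digraph is a digraph $G$ on $n$ vertices with $\min_v\min\{|N^+(v)|,|N^-(v)|\}\geq(\frac12+\varepsilon)n$. A perfect fractional matching of a digraph $G$ is $\mathbf{x}\colon E(G)\to\mathbb{R}_{\geq0}$ with $\sum_{w\in N^+(v)}\mathbf{x}_{vw}=1=\sum_{w\in N^-(v)}\mathbf{x}_{wv}$ for every vertex $v$. It is $b$-normal if $\frac1{b|V(G)|}\leq\mathbf{x}_e\leq\frac b{|V(G)|}$ for all $e\in E(G)$. Its entropy is $h(\mathbf{x})=\sum_{e\in E(G)}\mathbf{x}_e\log\frac1{\mathbf{x}_e}$. *)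

(* Defs.v *)
From HB Require Import structures.
From mathcomp Require Import all_boot all_order all_algebra.
From mathcomp Require Import all_classical all_reals.
From mathcomp Require Import exp.
From mathcomp Require Import Rstruct.
Set Implicit Arguments. Unset Strict Implicit. Unset Printing Implicit Defensive.
Import Order.TTheory GRing.Theory Num.Theory.
Local Open Scope ring_scope.

Notation R := Rdefinitions.R.

Definition log2 (x : R) : R := ln x / ln 2.

(* A digraph on vertex set 'I_n: an edge relation; no loops, at most one
   edge per ordered pair (automatic for a relation). *)
Record digraph (n : nat) := Digraph {
  edge : rel 'I_n ;
  edge_irrefl : forall v, ~~ edge v v }.

Definition outN n (G : digraph n) (v : 'I_n) : {set 'I_n} := [set w | edge G v w].
Definition inN n (G : digraph n) (v : 'I_n) : {set 'I_n} := [set w | edge G w v].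

Definition is_neps_digraph n (eps : R) (G : digraph n) : Prop :=
  forall v : 'I_n, (1/2 + eps) * n%:R <= #|outN G v|%:R /\
                   (1/2 + eps) * n%:R <= #|inN G v|%:R.

(* A weighting x : 'I_n -> 'I_n -> R; only values on edges matter. *)
Definition weighting n := 'I_n -> 'I_n -> R.

Definition perfect_fractional_matching n (G : digraph n) (x : weighting n) : Prop :=
  (forall v w, edge G v w -> 0 <= x v w) /\
  (forall v, \sum_(w in outN G v) x v w = 1) /\
  (forall v, \sum_(w in inN G v) x w v = 1).

Definition b_normal n (G : digraph n) (b : R) (x : weighting n) : Prop :=
  forall v w, edge G v w -> 1 / (b * n%:R) <= x v w /\ x v w <= b / n%:R.

Definition entropy n (G : digraph n) (x : weighting n) : R :=
  \sum_(v : 'I_n) \sum_(w in outN G v) x v w * log2 (1 / x v w).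

(* Main.v *)
Require Import Defs.
From mathcomp Require Import all_boot all_order all_algebra.
From mathcomp Require Import all_classical all_reals exp Rstruct.
From mathcomp Require Import sequences.
From mathcomp Require Import ring lra.
Import Order.TTheory GRing.Theory Num.Theory.
Local Open Scope ring_scope.

Lemma ln_le_sub1 (y : R) : 0 < y -> ln y <= y - 1.
Proof.
move=> y0; have := @le_ln1Dx R (y - 1).
have -> : 1 + (y - 1) = y by ring.
apply; lra.
Qed.

Lemma ln_ge_1sub (y : R) : 0 < y -> 1 - y^-1 <= ln y.
Proof.
move=> y0; have := @ln_le_sub1 y^-1; rewrite invr_gt0 => /(_ y0).
rewrite lnV ?posrE //; lra.
Qed.

Lemma negxlnx_le1 (u : R) : 0 < u -> - (u * ln u) <= 1.
Proof.
move=> u0; have := @ln_ge_1sub u u0.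
have h : u * (1 - u^-1) = u - 1 by rewrite mulrBr mulr1 mulfV ?gt_eqF.
move=> hl; have : u * (1 - u^-1) <= u * ln u by rewrite ler_pM2l.
rewrite h; lra.
Qed.

Lemma ln4_le3 : ln (4 : R) <= 3.
Proof. by have := @ln_le_sub1 4; move=> h; apply: le_trans (h _) _ => //; lra. Qed.

Lemma S_lemma (N p y : R) : 0 < N -> 0 <= p -> 0 < y -> p <= 4 * y ->
  - (p * ln (N * y)) <= 3 * p + 1 / N.
Proof.
move=> N0 p0 y0 py.
have [->|pp] := eqVneq p 0.
  by rewrite mul0r oppr0 mulr0 add0r divr_ge0 // ltW.
have p1 : 0 < p by rewrite lt_neqAle eq_sym pp p0.
have Np : 0 < N * p by rewrite mulr_gt0.
have h1 : ln (N * p / 4) <= ln (N * y).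
  rewrite ler_ln ?posrE ?mulr_gt0 ?divr_gt0 ?invr_gt0 //.
  rewrite ler_pdivrMr // -mulrA ler_pM2l //; lra.
have h2 : ln (N * p / 4) = ln (N * p) - ln 4 by rewrite ln_div ?posrE.
have h3 := negxlnx_le1 _ Np.
have h4 : - (p * ln (N * p)) = (- (N * p * ln (N * p))) / N.
  by field; rewrite gt_eqF.
have h5 : - (N * p * ln (N * p)) / N <= 1 / N by rewrite ler_pM2r ?invr_gt0.
have h6 : p * ln (N * p / 4) <= p * ln (N * y) by rewrite (ler_pM2l p1).
have h7 := ln4_le3.
have h8 : p * ln 4 <= p * 3 by rewrite (ler_pM2l p1).
rewrite h2 mulrBr in h6.
move: h4 h5 h6 h8; move: (p * ln (N * p)) (- (N * p * ln (N * p)) / N) (p * ln (N * y)) (p * ln 4) => a b cc d.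
lra.
Qed.

Lemma edge_bound (N mm mc t1 t2 t3 tau th K L' B x : R) :
  0 < N -> 0 <= mm -> mc = Num.min mm (K / N) -> 4 <= K -> 0 <= tau ->
  0 <= t1 -> 0 <= t2 -> 0 <= t3 -> 0 <= th -> t2 <= mc * th ->
  x = (1 - tau) * mc + tau / N + t1 - t2 + t3 ->
  mc / 4 + tau / N <= x -> 0 < x -> N * x <= B ->
  (t1 != 0 \/ t3 != 0 -> N * x <= L') ->
  (x - mm) * ln (N * x) <=
    - ((mm - mc) * ln (K / 4)) + (t1 + t3) * ln L' + (tau + th) * (3 * mc + 1 / N)
    + tau / N * ln B.
Proof.
move=> N0 mm0 hmc K4 tau0 t10 t20 t30 th0 t2le hx xlb x0 xB xL.
set l := ln (N * x).
have Nx0 : 0 < N * x by rewrite mulr_gt0.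
have mc0 : 0 <= mc by rewrite hmc le_min mm0 divr_ge0 //; lra.
have tN0 : 0 <= tau / N by rewrite divr_ge0 // ltW.
have mcx : mc <= 4 * x by move: xlb tN0; move: (tau / N) => q; lra.
have E : (x - mm) * l = - ((mm - mc) * l) + tau * (- (mc * l)) + tau / N * l
   + (t1 + t3) * l + (- (t2 * l)) by rewrite hx; ring.
have S := @S_lemma N mc x N0 mc0 x0 mcx.
have ha : - ((mm - mc) * l) <= - ((mm - mc) * ln (K / 4)).
  have [hle|hgt] := lerP mm (K / N).
    have -> : mc = mm by rewrite hmc; apply/min_idPl.
    by rewrite subrr !mul0r.
  have hmc' : mc = K / N by rewrite hmc; apply/min_idPr; exact: ltW.
  have d0 : 0 <= mm - mc by rewrite subr_ge0 hmc' ltW.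
  rewrite lerN2 ler_wpM2l //.
  rewrite ler_ln ?posrE ?divr_gt0 //; last by lra.
  have : N * (mc / 4) <= N * x by rewrite ler_pM2l //; lra.
  by rewrite hmc' mulrA mulrCA divff ?gt_eqF // mulr1 mulrC.
have hb : tau * (- (mc * l)) <= tau * (3 * mc + 1 / N) by rewrite ler_wpM2l.
have hc : tau / N * l <= tau / N * ln B.
  by rewrite ler_wpM2l // ler_ln ?posrE //; apply: lt_le_trans xB.
have hd : (t1 + t3) * l <= (t1 + t3) * ln L'.
  have [e|e] := boolP ((t1 != 0) || (t3 != 0)).
    have hL : N * x <= L' by apply: xL; case/orP: e; [left|right].
    have L0 : 0 < L' := lt_le_trans Nx0 hL.
    by rewrite ler_wpM2l ?addr_ge0 // ler_ln ?posrE.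
  move: e; rewrite negb_or !negbK => /andP[/eqP-> /eqP->].
  by rewrite addr0 !mul0r.
have he : - (t2 * l) <= th * (3 * mc + 1 / N).
  have [lpos|lneg] := lerP 0 l.
    have : 0 <= t2 * l by rewrite mulr_ge0.
    have q0 : 0 <= 1 / N by rewrite divr_ge0 // ltW.
    have : 0 <= th * (3 * mc + 1 / N).
      by apply: mulr_ge0 => //; move: q0 mc0; move: (1 / N) => q; lra.
    lra.
  have : t2 * (- l) <= mc * th * (- l) by rewrite ler_wpM2r // oppr_ge0 ltW.
  have : th * (- (mc * l)) <= th * (3 * mc + 1 / N) by rewrite ler_wpM2l.
  have -> : mc * th * (- l) = th * (- (mc * l)) by ring.
  have -> : t2 * (- l) = - (t2 * l) by ring.
  lra.
rewrite E [(tau + th) * _]mulrDl.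
move: ha hb hc hd he.
move: (- ((mm - mc) * l)) (tau * (- (mc * l))) (tau / N * l) ((t1 + t3) * l) (- (t2 * l)).
move: (- ((mm - mc) * ln (K / 4))) (tau * (3 * mc + 1 / N)) (tau / N * ln B) ((t1 + t3) * ln L') (th * (3 * mc + 1 / N)).
move=> *; lra.
Qed.

Lemma psi_bound (N mm y : R) : 0 < N -> 0 <= mm -> 0 < y ->
  mm * ln (1 / mm) - y * ln (1 / y) <= (y - mm) * ln (N * y) + (mm - y) * (ln N - 1).
Proof.
move=> N0 mm0 y0.
have ey : ln (1 / y) = - ln y by rewrite div1r lnV ?posrE.
have eN : ln (N * y) = ln N + ln y by rewrite lnM ?posrE.
rewrite ey eN.
have [->|mp] := eqVneq mm 0.
  rewrite mul0r.
  have -> : (y - 0) * (ln N + ln y) + (0 - y) * (ln N - 1) = y * ln y + y by ring.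
  have -> : 0 - y * - ln y = y * ln y by ring.
  have : 0 <= y by rewrite ltW.
  move: (y * ln y) => a; lra.
have m1 : 0 < mm by rewrite lt_neqAle eq_sym mp mm0.
have em : ln (1 / mm) = - ln mm by rewrite div1r lnV ?posrE.
rewrite em.
have h1 : ln (y / mm) <= y / mm - 1 by apply: ln_le_sub1; rewrite divr_gt0.
have h2 : ln (y / mm) = ln y - ln mm by rewrite ln_div ?posrE.
have h3 : mm * (ln y - ln mm) <= mm * (y / mm - 1) by rewrite -h2 ler_pM2l.
have h4 : mm * (y / mm - 1) = y - mm by rewrite mulrBr mulr1 mulrCA divff ?gt_eqF // mulr1.
rewrite h4 in h3.
have -> : mm * - ln mm - y * - ln y = y * ln y - mm * ln mm by ring.
have -> : (y - mm) * (ln N + ln y) + (mm - y) * (ln N - 1) = y * ln y - mm * ln y + y - mm by ring.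
have e5 : mm * (ln y - ln mm) = mm * ln y - mm * ln mm by ring.
rewrite e5 in h3.
move: h3; move: (mm * ln y) (mm * ln mm) (y * ln y) => a b d; lra.
Qed.

Lemma cap_bound (N mm K : R) : 0 < N -> 0 <= mm -> 1 <= K ->
  mm * ln (1 / mm) <= mm * ln N + 1 / N - (mm - Num.min mm (K / N)) * ln K.
Proof.
move=> N0 mm0 K1.
have KN0 : 0 <= K / N by rewrite divr_ge0 // ?ltW //; lra.
have q0 : 0 < 1 / N by rewrite divr_gt0.
have lK : 0 <= ln K by apply: ln_ge0.
have [->|mp] := eqVneq mm 0.
  have -> : Num.min 0 (K / N) = 0 by apply/min_idPl.
  rewrite !mul0r subrr mul0r subr0 add0r; exact: ltW.
have m1 : 0 < mm by rewrite lt_neqAle eq_sym mp mm0.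
have em : ln (1 / mm) = ln N - ln (N * mm).
  by rewrite div1r lnV ?posrE // lnM ?posrE //; ring.
have u0 : 0 < N * mm by rewrite mulr_gt0.
have hu := negxlnx_le1 _ u0.
have e2 : - (mm * ln (N * mm)) = (- (N * mm * ln (N * mm))) / N by field; rewrite gt_eqF.
have h5 : - (N * mm * ln (N * mm)) / N <= 1 / N by rewrite ler_pM2r ?invr_gt0.
rewrite em mulrBr.
have [hle|hgt] := lerP mm (K / N).
  rewrite subrr mul0r subr0.
  move: e2 h5; move: (- (mm * ln (N * mm))) (- (N * mm * ln (N * mm)) / N) (mm * ln (N * mm)) (mm * ln N) (1 / N).
  move=> a b d f g; lra.
have hK : K < N * mm by rewrite -ltr_pdivrMl // mulrC.
have hl : ln K <= ln (N * mm) by rewrite ler_ln ?posrE //; lra.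
have h6 : mm * ln K <= mm * ln (N * mm) by rewrite ler_wpM2l // ltW.
have h7 : 0 <= K / N * ln K by rewrite mulr_ge0.
rewrite mulrBl.
move: h6 h7 q0; move: (mm * ln K) (mm * ln (N * mm)) (K / N * ln K) (mm * ln N) (1 / N).
move=> a b d f g; lra.
Qed.

Lemma sum4 {n} (f g h k : 'I_n -> R) :
  \sum_i (f i + g i - h i + k i) = \sum_i f i + \sum_i g i - \sum_i h i + \sum_i k i.
Proof. by rewrite !big_split /= sumrN. Qed.

Lemma dsum4 {n} (f1 f2 f3 f4 : 'I_n -> 'I_n -> R) (k1 k2 k3 k4 : R) :
  \sum_a \sum_b (- (f1 a b * k1) + f2 a b * k2 + k3 * f3 a b + f4 a b * k4) =
  - ((\sum_a \sum_b f1 a b) * k1) + (\sum_a \sum_b f2 a b) * k2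
  + k3 * (\sum_a \sum_b f3 a b) + (\sum_a \sum_b f4 a b) * k4.
Proof.
under eq_bigr => a _ do rewrite !big_split /= sumrN -!mulr_suml -mulr_sumr.
by rewrite !big_split /= sumrN -!mulr_suml -mulr_sumr.
Qed.

Lemma sq_div (N t l : R) : N != 0 -> N * N * (t / N * l) = t * N * l.
Proof. by move=> h; field. Qed.

Lemma final_arith {Xc X tau nn th eps lL lB lK4 : R} :
  0 <= Xc -> 0 <= X -> 0 < eps -> 0 <= nn -> 0 <= tau -> 0 <= lL -> 0 <= lB ->
  X <= Xc + tau * nn -> th * nn <= X / eps -> 2 * lL + 8 / eps <= lK4 ->
  tau * (2 * lL + 4 / eps + 4 + lB) <= eps / 2 ->
  - (Xc * lK4) + 2 * X * lL + (tau + th) * (4 * nn) + tau * nn * lB <= eps * nn / 2.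
Proof.
move=> Xc0 X0 e0 n0 t0 lL0 lB0 hX hth hK hQ.
have e4 : 0 <= 4 / eps by rewrite divr_ge0 // ltW.
set c0 := 2 * lL + 4 / eps.
have c00 : 0 <= c0 by rewrite /c0 addr_ge0 // mulr_ge0.
have h1 : X * c0 <= (Xc + tau * nn) * c0 by rewrite ler_wpM2r.
have h2 : Xc * c0 <= Xc * lK4.
  rewrite ler_wpM2l //; apply: le_trans hK; rewrite /c0.
  have : 4 / eps <= 8 / eps by rewrite ler_wpM2r ?invr_ge0 ?ltW //; lra.
  move: (4 / eps) (8 / eps) => p q; lra.
have h3 : nn * (tau * (2 * lL + 4 / eps + 4 + lB)) <= nn * (eps / 2) by rewrite ler_wpM2l.
have h5 : 4 * (th * nn) <= X * (4 / eps).
  have -> : X * (4 / eps) = 4 * (X / eps) by ring.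
  by rewrite ler_wpM2l.
have E : - (Xc * lK4) + 2 * X * lL + (tau + th) * (4 * nn) + tau * nn * lB =
   - (Xc * lK4) + (X * c0 - X * (4 / eps)) + 4 * (tau * nn) + 4 * (th * nn) + tau * nn * lB.
  by rewrite /c0; ring.
have E4 : nn * (tau * (2 * lL + 4 / eps + 4 + lB)) =
   tau * nn * c0 + 4 * (tau * nn) + tau * nn * lB by rewrite /c0; ring.
have E5 : (Xc + tau * nn) * c0 = Xc * c0 + tau * nn * c0 by ring.
have E6 : eps * nn / 2 = nn * (eps / 2) by ring.
rewrite E E6.
move: h1 h2 h3 h5; rewrite E4 E5.
move: (X * c0) (X * (4 / eps)) (Xc * c0) (Xc * lK4) (tau * nn * c0).
move: (4 * (tau * nn)) (tau * nn * lB) (nn * (eps / 2)) (4 * (th * nn)) => *.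
lra.
Qed.

Lemma pos_aux (q : R) : 0 <= q -> 0 < 2 * q + 4.
Proof. move=> *; lra. Qed.
Lemma tau_aux (e q : R) : 0 < e -> 0 <= q -> e / (2 * q + 4) <= e / 4.
Proof.
move=> e0 q0; have d0 := pos_aux _ q0.
rewrite ler_pdivrMr //.
have -> : e / 4 * (2 * q + 4) = e + e * q / 2 by field.
have : 0 <= e * q by rewrite mulr_ge0 // ltW.
move: (e * q) => p; lra.
Qed.
Lemma tauQ_aux (e q : R) : 0 < e -> 0 <= q -> e / (2 * q + 4) * q <= e / 2.
Proof.
move=> e0 q0; have d0 := pos_aux _ q0.
rewrite mulrAC ler_pdivrMr //.
have -> : e / 2 * (2 * q + 4) = e * q + 2 * e by field.
move: (e * q) => p; lra.
Qed.

Lemma ifR (b : bool) (y : R) : (if b then y else 0) = b%:R * y.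
Proof. by case: b; rewrite ?mul1r ?mul0r. Qed.

Lemma bool01 (b : bool) : 0 <= (b%:R : R) <= 1.
Proof. by case: b => /=; rewrite ?lexx ?ler01. Qed.

Section Main.
Variables (n : nat) (G : digraph n) (m : weighting n) (eps K L tau : R).
Hypotheses (eps0 : 0 < eps) (hdeg : is_neps_digraph eps G)
  (hm : perfect_fractional_matching G m) (K0 : 0 <= K) (L0 : 0 < L)
  (tau0 : 0 <= tau) (tau1 : tau <= 1).

Local Notation nn := (n%:R : R).

Definition ind (v w : 'I_n) : R := (edge G v w)%:R.

Lemma ind01 v w : 0 <= ind v w <= 1.
Proof. exact: bool01. Qed.
Lemma ind_ge0 v w : 0 <= ind v w. Proof. by case/andP: (ind01 v w). Qed.
Lemma ind_le1 v w : ind v w <= 1. Proof. by case/andP: (ind01 v w). Qed.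
Lemma ind_idem v w : ind v w * ind v w = ind v w.
Proof. by rewrite /ind; case: (edge G v w); rewrite ?mulr1 ?mulr0. Qed.

Lemma sum_out (f : 'I_n -> R) v : \sum_(w in outN G v) f w = \sum_w ind v w * f w.
Proof. by rewrite big_mkcond; apply: eq_bigr => w _; rewrite inE ifR. Qed.
Lemma sum_in (f : 'I_n -> R) w : \sum_(v in inN G w) f v = \sum_v ind v w * f v.
Proof. by rewrite big_mkcond; apply: eq_bigr => v _; rewrite inE ifR. Qed.

Lemma card_sum (A : {set 'I_n}) : (#|A|%:R : R) = \sum_(w in A) 1.
Proof. by rewrite sumr_const. Qed.

Lemma deg_out v : (1/2 + eps) * nn <= \sum_w ind v w.
Proof.
have := (hdeg v).1; rewrite card_sum sum_out.
by under eq_bigr do rewrite mulr1.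
Qed.
Lemma deg_in w : (1/2 + eps) * nn <= \sum_v ind v w.
Proof.
have := (hdeg w).2; rewrite card_sum sum_in.
by under eq_bigr do rewrite mulr1.
Qed.

Lemma sum_le_n (f : 'I_n -> R) : (forall i, f i <= 1) -> \sum_i f i <= nn.
Proof.
move=> h; apply: le_trans (ler_sum _ (fun i _ => h i)) _.
by rewrite sumr_const card_ord.
Qed.

Lemma n_gt0 (v : 'I_n) : 0 < nn.
Proof. by rewrite ltr0n; case: v => i /=; case: n. Qed.

Lemma div_mul_le (y : R) : 0 <= y -> y / nn * nn <= y.
Proof.
move=> y0; case: n => [|k]; first by rewrite mulr0.
by rewrite divfK ?pnatr_eq0.
Qed.

Lemma indm_ge0 v w : 0 <= ind v w * m v w.
Proof.
rewrite /ind; case e: (edge G v w); last by rewrite mul0r.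
by rewrite mul1r; apply: hm.1.
Qed.
Lemma m_row v : \sum_w ind v w * m v w = 1.
Proof. by rewrite -sum_out; apply: hm.2.1. Qed.
Lemma m_col w : \sum_v ind v w * m v w = 1.
Proof. by rewrite -sum_in; apply: hm.2.2. Qed.

Definition mc v w := ind v w * Num.min (m v w) (K / nn).

Lemma Kn_ge0 : 0 <= K / nn.
Proof. by rewrite divr_ge0. Qed.

Lemma mc_ge0 v w : 0 <= mc v w.
Proof.
rewrite /mc /ind; case e: (edge G v w); last by rewrite mul0r.
rewrite mul1r le_min Kn_ge0 andbT.
by have := hm.1 v w e.
Qed.
Lemma mc_le_m v w : mc v w <= ind v w * m v w.
Proof. by rewrite /mc ler_wpM2l ?ind_ge0 // ge_min lexx. Qed.
Lemma mc_le_K v w : mc v w <= K / nn.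
Proof.
rewrite /mc /ind; case: (edge G v w); rewrite ?mul0r ?mul1r ?Kn_ge0 //.
by rewrite ge_min lexx orbT.
Qed.
Lemma ind_mc v w : ind v w * mc v w = mc v w.
Proof. by rewrite /mc mulrA ind_idem. Qed.

Lemma rowmc_le1 v : \sum_w mc v w <= 1.
Proof. by rewrite -(m_row v); apply: ler_sum => w _; apply: mc_le_m. Qed.
Lemma colmc_le1 w : \sum_v mc v w <= 1.
Proof. by rewrite -(m_col w); apply: ler_sum => v _; apply: mc_le_m. Qed.

Definition Xc := nn - \sum_v \sum_w mc v w.

Lemma Xc_row : Xc = \sum_v (1 - \sum_w mc v w).
Proof. by rewrite sumrB sumr_const card_ord. Qed.
Lemma Xc_col : Xc = \sum_w (1 - \sum_v mc v w).
Proof. by rewrite sumrB sumr_const card_ord /Xc (exchange_big). Qed.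
Lemma Xc_ge0 : 0 <= Xc.
Proof. by rewrite Xc_row sumr_ge0 // => v _; rewrite subr_ge0 rowmc_le1. Qed.
Lemma Xc_m : \sum_v \sum_w (ind v w * m v w - mc v w) = Xc.
Proof.
under eq_bigr do rewrite sumrB m_row.
by rewrite sumrB sumr_const card_ord.
Qed.


Definition psi (y : R) := y * ln (1 / y).

Lemma entropy_eq (y : weighting n) :
  entropy G y = (\sum_v \sum_w ind v w * psi (y v w)) / ln 2.
Proof.
rewrite /entropy mulr_suml; apply: eq_bigr => v _.
rewrite sum_out mulr_suml; apply: eq_bigr => w _.
by rewrite /log2 /psi !mulrA.
Qed.

Lemma ln2_gt0 : 0 < ln (2 : R).
Proof. by apply: ln_gt0; rewrite ltr1n. Qed.
Lemma ln2_le1 : ln (2 : R) <= 1.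
Proof. have := @ln_le_sub1 2; have h2 : (0:R) < 2 by lra. move=> /(_ h2); lra. Qed.
Lemma ln2_ge_half : 1 / 2 <= ln (2 : R).
Proof. have h2 : (0:R) < 2 by lra. have := @ln_ge_1sub 2 h2; rewrite -div1r; lra. Qed.

Hypothesis hent : nn * log2 (nn / 2) + eps * nn <= entropy G m.
Hypothesis K1 : 1 <= K.

Lemma row_ind_div v : \sum_w ind v w / nn <= 1.
Proof.
rewrite -mulr_suml.
have h := sum_le_n (ind v) (ind_le1 v).
have [n0|n0] := eqVneq nn 0; first by rewrite n0 invr0 mulr0 ler01.
have np : 0 < nn by rewrite lt_neqAle eq_sym n0 ler0n.
by rewrite ler_pdivrMr // mul1r.
Qed.
Lemma sum_ind_div : \sum_v \sum_w ind v w / nn <= nn.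
Proof. exact: sum_le_n row_ind_div. Qed.
Lemma sum_mc_le : \sum_v \sum_w mc v w <= nn.
Proof. exact: sum_le_n rowmc_le1. Qed.

Lemma Xc_le_n : Xc <= nn.
Proof.
rewrite /Xc lerBlDr lerDl sumr_ge0 // => v _; rewrite sumr_ge0 // => w _; exact: mc_ge0.
Qed.

Lemma Xc_lnK : Xc * ln K <= 2 * nn.
Proof.
have lK : 0 <= ln K by apply: ln_ge0.
have [n0|n0] := eqVneq nn 0.
  have : Xc = 0 by apply/le_anti; rewrite Xc_ge0 andbT -n0 Xc_le_n.
  by move=> ->; rewrite mul0r n0 mulr0.
have np : 0 < nn by rewrite lt_neqAle eq_sym n0 ler0n.
set S := \sum_v \sum_w ind v w * psi (m v w).
have H1 : S <= \sum_v \sum_w (ind v w * m v w * ln nn + ind v w / nn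
                 - (ind v w * m v w - mc v w) * ln K).
  apply: ler_sum => v _; apply: ler_sum => w _.
  rewrite /mc /ind /psi; case e: (edge G v w); last by rewrite !(mul0r, subrr, subr0, addr0, mulr0).
  by have := @cap_bound nn (m v w) K np (hm.1 v w e) K1; rewrite !mul1r.
have E1 : \sum_v \sum_w (ind v w * m v w * ln nn + ind v w / nn
                 - (ind v w * m v w - mc v w) * ln K)
   = nn * ln nn + \sum_v \sum_w ind v w / nn - Xc * ln K.
  rewrite -Xc_m mulr_suml.
  have -> : nn * ln nn = \sum_v \sum_w ind v w * m v w * ln nn.
    transitivity (\sum_(v : 'I_n) ln nn); first by rewrite sumr_const card_ord mulr_natl.
    by apply: eq_bigr => v _; rewrite -mulr_suml m_row mul1r.
  rewrite -!big_split -sumrB /=; apply: eq_bigr => v _.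
  rewrite mulr_suml -!big_split -sumrB /=; apply: eq_bigr => w _.
  done.
have H2 : nn * ln nn - nn * ln 2 <= S.
  have eS : S = entropy G m * ln 2 by rewrite entropy_eq divfK // gt_eqF // ln2_gt0.
  have hl : ln (nn / 2) = ln nn - ln 2 by rewrite ln_div ?posrE.
  have l2 := ln2_gt0.
  have : (nn * log2 (nn / 2) + eps * nn) * ln 2 <= entropy G m * ln 2 by rewrite ler_pM2r.
  rewrite -eS mulrDl /log2 hl mulrA divfK ?gt_eqF //.
  have : 0 <= eps * nn * ln 2 by rewrite !mulr_ge0 // ltW.
  rewrite mulrBr.
  move: (eps * nn * ln 2) (nn * ln nn) (nn * ln 2) => a b d.
  move=> ha hb; apply: le_trans hb; rewrite lerDl //.
move: H1; rewrite E1 => H1.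
have hd := sum_ind_div.
have l2 := ln2_le1.
have : nn * ln 2 <= nn * 1 by rewrite ler_pM2l.
move: H1 H2 hd; clearbody S; move: S (nn * ln nn) (Xc * ln K) (nn * ln 2) (\sum_v \sum_w ind v w / nn).
move=> *; lra.
Qed.

Definition z v w := (1 - tau) * mc v w + tau / nn * ind v w.
Definition r v := 1 - \sum_w z v w.
Definition c w := 1 - \sum_v z v w.
Definition X := \sum_v r v.

Lemma z_ge0 v w : 0 <= z v w.
Proof.
rewrite /z addr_ge0 // mulr_ge0 ?mc_ge0 ?ind_ge0 ?divr_ge0 ?subr_ge0 //.
Qed.

Lemma rowz v : \sum_w z v w = (1 - tau) * \sum_w mc v w + tau / nn * \sum_w ind v w.
Proof. by rewrite big_split /= -!mulr_sumr. Qed.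
Lemma colz w : \sum_v z v w = (1 - tau) * \sum_v mc v w + tau / nn * \sum_v ind v w.
Proof. by rewrite big_split /= -!mulr_sumr. Qed.

Lemma taun_le (s : R) : s <= nn -> tau / nn * s <= tau.
Proof.
move=> hs; apply: (@le_trans _ _ (tau / nn * nn)); last exact: div_mul_le.
by rewrite ler_wpM2l // divr_ge0.
Qed.

Lemma r_ge0 v : 0 <= r v.
Proof.
rewrite /r subr_ge0 rowz.
have h1 := rowmc_le1 v.
have h2 := taun_le _ (sum_le_n (ind v) (ind_le1 v)).
have : (1 - tau) * \sum_w mc v w <= 1 - tau by rewrite ler_piMr ?subr_ge0.
lra.
Qed.
Lemma c_ge0 w : 0 <= c w.
Proof.
rewrite /c subr_ge0 colz.
have h1 := colmc_le1 w.
have h2 := taun_le _ (sum_le_n (fun v => ind v w) (fun v => ind_le1 v w)).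
have : (1 - tau) * \sum_v mc v w <= 1 - tau by rewrite ler_piMr ?subr_ge0.
lra.
Qed.
Lemma r_le1 v : r v <= 1.
Proof. by rewrite /r lerBlDr lerDl sumr_ge0 // => w _; apply: z_ge0. Qed.
Lemma c_le1 w : c w <= 1.
Proof. by rewrite /c lerBlDr lerDl sumr_ge0 // => v _; apply: z_ge0. Qed.

Lemma sumc : \sum_w c w = X.
Proof.
rewrite /X /r /c !sumrB !sumr_const !card_ord; congr (_ - _).
exact: exchange_big.
Qed.
Lemma X_ge0 : 0 <= X.
Proof. by rewrite sumr_ge0 // => v _; apply: r_ge0. Qed.

Lemma X_le : X <= Xc + tau * nn.
Proof.
rewrite /X Xc_row.
have -> : tau * nn = \sum_(v : 'I_n) tau by rewrite sumr_const card_ord mulr_natr.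
rewrite -big_split /=; apply: ler_sum => v _.
rewrite /r rowz.
have h1 := rowmc_le1 v.
have h2 : 0 <= tau / nn * \sum_w ind v w by rewrite mulr_ge0 ?divr_ge0 ?sumr_ge0 // => w _; apply: ind_ge0.
have h3 : 0 <= tau * \sum_w mc v w by rewrite mulr_ge0 ?sumr_ge0 // => w _; apply: mc_ge0.
have h4 : tau * \sum_w mc v w <= tau by rewrite ler_piMr.
nra.
Qed.


Lemma r_le_X a : r a <= X.
Proof.
rewrite /X (bigD1 a) //= lerDl sumr_ge0 // => v _; exact: r_ge0.
Qed.
Lemma c_le_X b : c b <= X.
Proof.
rewrite -sumc (bigD1 b) //= lerDl sumr_ge0 // => v _; exact: c_ge0.
Qed.

Lemma sumF1 a : \sum_w r a * c w / X = r a.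
Proof.
rewrite -mulr_suml -mulr_sumr sumc.
have [X0|X0] := eqVneq X 0.
  have : r a = 0 by apply/le_anti; rewrite r_ge0 andbT -X0 r_le_X.
  by move=> ->; rewrite !mul0r.
by rewrite mulfK.
Qed.
Lemma sumF2 b : \sum_v r v * c b / X = c b.
Proof.
under eq_bigr do rewrite [r _ * _]mulrC.
rewrite -mulr_suml -mulr_sumr.
have [X0|X0] := eqVneq X 0.
  have : c b = 0 by apply/le_anti; rewrite c_ge0 andbT -X0 c_le_X.
  by move=> ->; rewrite !mul0r.
by rewrite mulfK.
Qed.

Definition lt v w := ind v w * ((mc v w <= L / nn)%R)%:R.
Definition pi v w' v' w := lt v w' * lt v' w * mc v' w'.
Definition W v w := \sum_w' \sum_v' pi v w' v' w.
Definition F v w := r v * c w / X / W v w.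
Definition t1 a b := \sum_w \sum_v' pi a b v' w * F a w.
Definition t2 a b := \sum_v \sum_w pi v b a w * F v w.
Definition t3 a b := \sum_v \sum_w' pi v w' a b * F v b.
Definition x a b := z a b + t1 a b - t2 a b + t3 a b.

Lemma lt01 v w : 0 <= lt v w <= 1.
Proof.
rewrite /lt; have := ind01 v w; have := bool01 (mc v w <= L / nn); nra.
Qed.
Lemma lt_ge0 v w : 0 <= lt v w. Proof. by case/andP: (lt01 v w). Qed.
Lemma lt_le1 v w : lt v w <= 1. Proof. by case/andP: (lt01 v w). Qed.

Lemma pi_ge0 v w' v' w : 0 <= pi v w' v' w.
Proof. by rewrite /pi; apply: mulr_ge0; [apply: mulr_ge0; apply: lt_ge0 | apply: mc_ge0]. Qed.
Lemma pi_le v w' v' w : pi v w' v' w <= mc v' w'.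
Proof.
rewrite /pi; have := lt01 v w'; have := lt01 v' w; have := mc_ge0 v' w'.
move=> h1 /andP[h2 h3] /andP[h4 h5].
have h6 : 0 <= lt v w' * lt v' w <= 1 by apply/andP; split; nra.
nra.
Qed.

Lemma lt_lb v w : ind v w - nn / L * mc v w <= lt v w.
Proof.
rewrite /lt /mc /ind; case e: (edge G v w); rewrite ?mul0r ?mulr0 ?subr0 ?lexx //.
rewrite !mul1r.
have n0 := n_gt0 v.
have y0 : 0 <= Num.min (m v w) (K / nn).
  by have := mc_ge0 v w; rewrite /mc /ind e mul1r.
have nL : 0 <= nn / L by apply: divr_ge0; [apply: ler0n | apply: ltW].
have hp : 0 <= nn / L * Num.min (m v w) (K / nn) by apply: mulr_ge0.
case h: (Num.min (m v w) (K / nn) <= L / nn); rewrite ?mulr1n ?mulr0n.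
  lra.
move/negbT: h; rewrite -ltNge => h.
have e1 : nn / L * (L / nn) = 1 by rewrite mulrA divfK ?gt_eqF // mulfV ?gt_eqF.
have : nn / L * (L / nn) <= nn / L * Num.min (m v w) (K / nn).
  by rewrite ler_wpM2l // ltW.
lra.
Qed.

Lemma sum_lt_lb v : \sum_w ind v w - nn / L <= \sum_w lt v w.
Proof.
have h1 : \sum_w ind v w - nn / L * \sum_w mc v w <= \sum_w lt v w.
  by rewrite mulr_sumr -sumrB; apply: ler_sum => w _; apply: lt_lb.
have h2 : nn / L * \sum_w mc v w <= nn / L.
  by rewrite ler_piMr ?rowmc_le1 // divr_ge0 // ltW.
lra.
Qed.
Lemma sum_lt_lb' w : \sum_v ind v w - nn / L <= \sum_v lt v w.
Proof.
have h1 : \sum_v ind v w - nn / L * \sum_v mc v w <= \sum_v lt v w.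
  rewrite mulr_sumr -sumrB; apply: ler_sum => v _.
  have := lt_lb v w; done.
have h2 : nn / L * \sum_v mc v w <= nn / L.
  by rewrite ler_piMr ?colmc_le1 // divr_ge0 // ltW.
lra.
Qed.

Lemma W_lb v w : 2 * eps * nn - 2 * (nn / L) - Xc <= W v w.
Proof.
have key : \sum_w' \sum_v' (lt v w' + lt v' w - 1) * mc v' w' <= W v w.
  apply: ler_sum => w' _; apply: ler_sum => v' _; rewrite /pi.
  have := lt01 v w'; have := lt01 v' w; have := mc_ge0 v' w'.
  move=> h1 /andP[h2 h3] /andP[h4 h5].
  have : 0 <= (1 - lt v w') * (1 - lt v' w) * mc v' w'.
    by apply: mulr_ge0 => //; apply: mulr_ge0; rewrite subr_ge0.
  nra.
apply: le_trans key.
have e1 : \sum_w' \sum_v' (lt v w' + lt v' w - 1) * mc v' w' =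
   \sum_w' lt v w' * (\sum_v' mc v' w') + \sum_v' lt v' w * (\sum_w' mc v' w')
   - \sum_v' \sum_w' mc v' w'.
  have a1 : \sum_w' lt v w' * (\sum_v' mc v' w') = \sum_w' \sum_v' lt v w' * mc v' w'.
    by apply: eq_bigr => w' _; rewrite mulr_sumr.
  have a2 : \sum_v' lt v' w * (\sum_w' mc v' w') = \sum_w' \sum_v' lt v' w * mc v' w'.
    by rewrite [RHS]exchange_big /=; apply: eq_bigr => v' _; rewrite mulr_sumr.
  have a3 : \sum_v' \sum_w' mc v' w' = \sum_w' \sum_v' mc v' w' by exact: exchange_big.
  rewrite a1 a2 a3 -big_split -sumrB /=; apply: eq_bigr => w' _.
  rewrite -big_split -sumrB /=; apply: eq_bigr => v' _.
  ring.
rewrite e1.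
have S1 : \sum_w' lt v w' - Xc <= \sum_w' lt v w' * (\sum_v' mc v' w').
  rewrite Xc_col -sumrB; apply: ler_sum => w' _.
  have := lt01 v w'; have := colmc_le1 w'; move=> h1 /andP[h2 h3]; nra.
have S2 : \sum_v' lt v' w - Xc <= \sum_v' lt v' w * (\sum_w' mc v' w').
  rewrite Xc_row -sumrB; apply: ler_sum => v' _.
  have := lt01 v' w; have := rowmc_le1 v'; move=> h1 /andP[h2 h3]; nra.
have S3 : \sum_v' \sum_w' mc v' w' = nn - Xc by rewrite /Xc; ring.
have D1 := deg_out v; have D2 := deg_in w.
have T1 := sum_lt_lb v; have T2 := sum_lt_lb' w.
rewrite S3. lra.
Qed.


Lemma t_off a b : ind a b = 0 ->
  [/\ mc a b = 0, t1 a b = 0, t2 a b = 0 & t3 a b = 0].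
Proof.
move=> i0.
have lt0 : lt a b = 0 by rewrite /lt i0 mul0r.
have mc0 : mc a b = 0 by rewrite /mc i0 mul0r.
split => //.
- by rewrite /t1 big1 // => w _; rewrite big1 // => v' _; rewrite /pi lt0 !mul0r.
- by rewrite /t2 big1 // => v _; rewrite big1 // => w _; rewrite /pi mc0 mulr0 mul0r.
- by rewrite /t3 big1 // => v _; rewrite big1 // => w' _; rewrite /pi lt0 mulr0 !mul0r.
Qed.

Lemma x_ind a b : ind a b * x a b = x a b.
Proof.
rewrite /ind; case e: (edge G a b); first by rewrite mul1r.
rewrite mul0r.
have i0 : ind a b = 0 by rewrite /ind e.
have lt0 : lt a b = 0 by rewrite /lt i0 mul0r.
have mc0 : mc a b = 0 by rewrite /mc i0 mul0r.
have e1 : t1 a b = 0.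
  by rewrite /t1 big1 // => w _; rewrite big1 // => v' _; rewrite /pi lt0 !mul0r.
have e2 : t2 a b = 0.
  by rewrite /t2 big1 // => v _; rewrite big1 // => w _; rewrite /pi mc0 mulr0 mul0r.
have e3 : t3 a b = 0.
  by rewrite /t3 big1 // => v _; rewrite big1 // => w' _; rewrite /pi lt0 mulr0 !mul0r.
by rewrite /x /z mc0 i0 e1 e2 e3 !mulr0; ring.
Qed.

Hypothesis hLe : 4 <= L * eps.
Hypothesis hXc : Xc <= eps * nn / 4.
Hypothesis htau : tau <= eps / 4.

Lemma nL_le : nn / L <= eps * nn / 4.
Proof.
rewrite ler_pdivrMr //.
have hn : 0 <= nn by apply: ler0n.
have : 0 <= nn * (L * eps - 4) by rewrite mulr_ge0 // subr_ge0.
have -> : eps * nn / 4 * L = nn * (L * eps) / 4 by ring.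
lra.
Qed.

Lemma W_ge v w : eps * nn <= W v w.
Proof.
have := W_lb v w; have := nL_le; have h0 : 0 <= eps * nn by apply: mulr_ge0; [exact: ltW | exact: ler0n].
have -> : 2 * eps * nn = 2 * (eps * nn) by ring.
move=> h1 h2; move: h0 h1 h2 hXc; generalize (eps * nn) (nn / L) Xc (W v w) => A B C D; lra.
Qed.

Lemma W_gt0 v w : 0 < W v w.
Proof.
apply: lt_le_trans (W_ge v w); rewrite mulr_gt0 //; exact: n_gt0 v.
Qed.

Lemma WF v w : W v w * F v w = r v * c w / X.
Proof. by rewrite /F mulrC divfK // gt_eqF // W_gt0. Qed.

Lemma row_t1 a : \sum_b t1 a b = r a.
Proof.
rewrite /t1 exchange_big /= -(sumF1 a); apply: eq_bigr => w _.
rewrite -WF /W mulr_suml; apply: eq_bigr => b _; by rewrite mulr_suml.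
Qed.

Lemma row_t23 a : \sum_b t2 a b = \sum_b t3 a b.
Proof.
rewrite /t2 /t3 exchange_big [RHS]exchange_big /=.
by apply: eq_bigr => v _; rewrite [RHS]exchange_big.
Qed.

Lemma col_t3 b : \sum_a t3 a b = c b.
Proof.
rewrite /t3 exchange_big /= -(sumF2 b); apply: eq_bigr => v _.
rewrite exchange_big /= -WF /W mulr_suml; apply: eq_bigr => w' _; by rewrite mulr_suml.
Qed.

Lemma col_t12 b : \sum_a t1 a b = \sum_a t2 a b.
Proof.
rewrite /t1 /t2 [RHS]exchange_big /=.
by apply: eq_bigr => a _; rewrite exchange_big.
Qed.

Lemma row_x a : \sum_b x a b = 1.
Proof.
rewrite /x (sum4 (z a) (t1 a) (t2 a) (t3 a)) row_t1 row_t23 /r.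
by move: (\sum_b z a b) (\sum_b t3 a b) => p q; lra.
Qed.
Lemma col_x b : \sum_a x a b = 1.
Proof.
rewrite /x (sum4 (z ^~ b) (t1 ^~ b) (t2 ^~ b) (t3 ^~ b)) -col_t12 col_t3 /c.
by move: (\sum_a z a b) (\sum_a t1 a b) => p q; lra.
Qed.


Hypothesis heps1 : eps <= 1.

Lemma en_gt0 (v : 'I_n) : 0 < eps * nn.
Proof. by rewrite mulr_gt0 // (n_gt0 v). Qed.

Lemma q_ge0 v w : 0 <= r v * c w / X.
Proof. by rewrite divr_ge0 ?X_ge0 // mulr_ge0 ?r_ge0 ?c_ge0. Qed.

Lemma F_ge0 v w : 0 <= F v w.
Proof. by rewrite /F divr_ge0 ?q_ge0 // ltW // W_gt0. Qed.

Lemma F_le v w : F v w <= r v * c w / X / (eps * nn).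
Proof.
rewrite /F ler_wpM2l ?q_ge0 // lef_pV2 ?posrE ?W_gt0 ?(en_gt0 v) //.
exact: W_ge.
Qed.

Lemma t1_ge0 a b : 0 <= t1 a b.
Proof.
by rewrite /t1 sumr_ge0 // => w _; rewrite sumr_ge0 // => v' _; rewrite mulr_ge0 ?pi_ge0 ?F_ge0.
Qed.
Lemma t2_ge0 a b : 0 <= t2 a b.
Proof.
by rewrite /t2 sumr_ge0 // => w _; rewrite sumr_ge0 // => v' _; rewrite mulr_ge0 ?pi_ge0 ?F_ge0.
Qed.
Lemma t3_ge0 a b : 0 <= t3 a b.
Proof.
by rewrite /t3 sumr_ge0 // => w _; rewrite sumr_ge0 // => v' _; rewrite mulr_ge0 ?pi_ge0 ?F_ge0.
Qed.

Lemma t1_le a b : t1 a b <= r a / (eps * nn).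
Proof.
have e : r a / (eps * nn) = \sum_w r a * c w / X / (eps * nn) by rewrite -mulr_suml sumF1.
rewrite e /t1; apply: ler_sum => w _.
have hG : 0 <= r a * c w / X / (eps * nn) by rewrite divr_ge0 ?q_ge0 // ltW // (en_gt0 a).
apply: (@le_trans _ _ (\sum_v' mc v' b * (r a * c w / X / (eps * nn)))).
  apply: ler_sum => v' _; apply: ler_pM; rewrite ?pi_ge0 ?F_ge0 ?pi_le ?F_le //.
rewrite -mulr_suml mulrC; apply: ler_piMr => //; exact: colmc_le1.
Qed.

Lemma t3_le a b : t3 a b <= c b / (eps * nn).
Proof.
have e : c b / (eps * nn) = \sum_v r v * c b / X / (eps * nn) by rewrite -mulr_suml sumF2.
rewrite e /t3; apply: ler_sum => v _.
have hG : 0 <= r v * c b / X / (eps * nn) by rewrite divr_ge0 ?q_ge0 // ltW // (en_gt0 a).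
apply: (@le_trans _ _ (\sum_w' mc a w' * (r v * c b / X / (eps * nn)))).
  apply: ler_sum => w' _; apply: ler_pM; rewrite ?pi_ge0 ?F_ge0 ?pi_le ?F_le //.
rewrite -mulr_suml mulrC; apply: ler_piMr => //; exact: rowmc_le1.
Qed.

Lemma t2_le a b : t2 a b <= mc a b * (X / (eps * nn)).
Proof.
have e : \sum_v \sum_w mc a b * (r v * c w / X / (eps * nn)) = mc a b * (X / (eps * nn)).
  transitivity (\sum_v mc a b * (r v / (eps * nn))).
    by apply: eq_bigr => v _; rewrite -mulr_sumr -mulr_suml sumF1.
  by rewrite -mulr_sumr -mulr_suml.
rewrite -e /t2; apply: ler_sum => v _; apply: ler_sum => w _.
apply: ler_pM; rewrite ?pi_ge0 ?F_ge0 ?pi_le ?F_le //.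
Qed.

Lemma t1_heavy a b : L / nn < mc a b -> t1 a b = 0.
Proof.
move=> h; have l0 : lt a b = 0 by rewrite /lt leNgt h mulr0.
by rewrite /t1 big1 // => w _; rewrite big1 // => v' _; rewrite /pi l0 !mul0r.
Qed.
Lemma t3_heavy a b : L / nn < mc a b -> t3 a b = 0.
Proof.
move=> h; have l0 : lt a b = 0 by rewrite /lt leNgt h mulr0.
by rewrite /t3 big1 // => v _; rewrite big1 // => w' _; rewrite /pi l0 mulr0 !mul0r.
Qed.

Lemma X_le_half (v : 'I_n) : X / (eps * nn) <= 1 / 2.
Proof.
rewrite ler_pdivrMr ?(en_gt0 v) //.
have := X_le; have := hXc; have := htau.
have hn : 0 <= nn by apply: ler0n.
have : tau * nn <= eps / 4 * nn by rewrite ler_wpM2r.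
have -> : eps / 4 * nn = eps * nn / 4 by rewrite mulrAC.
move: (tau * nn) (eps * nn) Xc X => p q s t; lra.
Qed.

Lemma tau_le4 : tau <= 1 / 4.
Proof. by move: htau heps1 eps0; move: tau eps => p q; lra. Qed.

Lemma x_lb a b : edge G a b -> mc a b / 4 + tau / nn <= x a b.
Proof.
move=> e; have i1 : ind a b = 1 by rewrite /ind e.
have h2 := t2_le a b; have h1 := t1_ge0 a b; have h3 := t3_ge0 a b.
have hh : mc a b * (X / (eps * nn)) <= mc a b * (1 / 2) by rewrite ler_wpM2l ?mc_ge0 ?(X_le_half a).
have hm0 := mc_ge0 a b.
have ht : tau * mc a b <= 1 / 4 * mc a b by rewrite ler_wpM2r ?tau_le4.
rewrite /x /z i1 mulr1.
move: h1 h2 h3 hh hm0 ht; rewrite mulrBl mul1r.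
move: (t1 a b) (t2 a b) (t3 a b) (mc a b) (tau * mc a b) (mc a b * (X / (eps * nn))) (tau / nn).
move=> p q s u y k l; lra.
Qed.

Hypothesis taup : 0 < tau.
Hypothesis K4 : 4 <= K.

Definition Lp := L + 1 + 2 / eps.
Definition Bb := K + 1 + 2 / eps.
Definition th := X / (eps * nn).

Lemma x_ge_tau a b : edge G a b -> tau / nn <= x a b.
Proof.
move=> e; have := x_lb a b e; have := mc_ge0 a b.
have : 0 <= mc a b / 4 by rewrite divr_ge0 // mc_ge0.
move: (mc a b / 4) (tau / nn) (x a b) => p q y; lra.
Qed.

Lemma x_gt0 a b : edge G a b -> 0 < x a b.
Proof.
move=> e; apply: lt_le_trans (x_ge_tau a b e); rewrite divr_gt0 //; exact: n_gt0 a.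
Qed.

Lemma x_ub a b : edge G a b -> nn * x a b <= nn * mc a b + tau + 2 / eps.
Proof.
move=> e; have i1 : ind a b = 1 by rewrite /ind e.
have np := n_gt0 a; have E := en_gt0 a.
have hq1 : r a / (eps * nn) <= 1 / (eps * nn) by rewrite ler_pM2r ?invr_gt0 // r_le1.
have hq3 : c b / (eps * nn) <= 1 / (eps * nn) by rewrite ler_pM2r ?invr_gt0 // c_le1.
have h1 := le_trans (t1_le a b) hq1.
have h3 := le_trans (t3_le a b) hq3.
have h2 := t2_ge0 a b.
have hm0 := mc_ge0 a b.
have ht : 0 <= tau * mc a b by rewrite mulr_ge0 // ltW.
have hx : x a b <= mc a b + tau / nn + 2 / (eps * nn).
  rewrite /x /z i1 mulr1 mulrBl mul1r.
  have -> : 2 / (eps * nn) = 2 * (1 / (eps * nn)) by rewrite mul1r.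
  move: h1 h2 h3 ht; move: (t1 a b) (t2 a b) (t3 a b) (tau * mc a b) (1 / (eps * nn)).
  move=> p q u y k; lra.
have : nn * x a b <= nn * (mc a b + tau / nn + 2 / (eps * nn)) by rewrite ler_pM2l.
have -> : nn * (mc a b + tau / nn + 2 / (eps * nn)) = nn * mc a b + tau + 2 / eps.
  by field; rewrite ?gt_eqF.
done.
Qed.

Lemma nxB a b : edge G a b -> nn * x a b <= Bb.
Proof.
move=> e; have := x_ub a b e; have np := n_gt0 a.
have : nn * mc a b <= K.
  have := mc_le_K a b; rewrite -(ler_pM2l np) => h; apply: le_trans h _.
  by rewrite mulrCA divff ?gt_eqF // mulr1.
rewrite /Bb; move: (nn * x a b) (nn * mc a b) (2 / eps) => p q u.
move: tau1; move: tau => t; lra.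
Qed.

Lemma nxL a b : edge G a b -> t1 a b != 0 \/ t3 a b != 0 -> nn * x a b <= Lp.
Proof.
move=> e ht; have := x_ub a b e; have np := n_gt0 a.
have hl : mc a b <= L / nn.
  rewrite leNgt; apply/negP => h.
  by case: ht; rewrite ?(t1_heavy a b h) ?(t3_heavy a b h) eqxx.
have : nn * mc a b <= L.
  move: hl; rewrite -(ler_pM2l np) => h; apply: le_trans h _.
  by rewrite mulrCA divff ?gt_eqF // mulr1.
rewrite /Lp; move: (nn * x a b) (nn * mc a b) (2 / eps) => p q u.
move: tau1; move: tau => t; lra.
Qed.

Definition Rt a b := - ((ind a b * m a b - mc a b) * ln (K / 4)) + (t1 a b + t3 a b) * ln Lp
  + (tau + th) * (3 * mc a b + ind a b / nn) + ind a b * (tau / nn * ln Bb).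

Lemma edge_ineq a b :
  ind a b * (psi (m a b) - psi (x a b)) <= ind a b * ((m a b - x a b) * (ln nn - 1)) + Rt a b.
Proof.
case e: (edge G a b).
  have i1 : ind a b = 1 by rewrite /ind e.
  rewrite /Rt i1 (mul1r (psi _ - _)) (mul1r (_ * (ln nn - 1))) (mul1r (m a b)) (mul1r (tau / nn * _)).
  have np := n_gt0 a.
  have m0 : 0 <= m a b by apply: hm.1.
  have P := @psi_bound nn (m a b) (x a b) np m0 (x_gt0 a b e).
  have hmc : mc a b = Num.min (m a b) (K / nn) by rewrite /mc i1 mul1r.
  have th0 : 0 <= th by rewrite divr_ge0 ?X_ge0 // ltW // (en_gt0 a).
  have hx : x a b = (1 - tau) * mc a b + tau / nn + t1 a b - t2 a b + t3 a b.
    by rewrite /x /z i1 mulr1.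
  have Q := @edge_bound nn (m a b) (mc a b) (t1 a b) (t2 a b) (t3 a b) tau th K Lp Bb (x a b)
    np m0 hmc K4 tau0 (t1_ge0 a b) (t2_ge0 a b) (t3_ge0 a b) th0 (t2_le a b) hx
    (x_lb a b e) (x_gt0 a b e) (nxB a b e) (nxL a b e).
  rewrite /psi; move: P Q.
  move: (m a b * ln (1 / m a b) - x a b * ln (1 / x a b)) ((x a b - m a b) * ln (nn * x a b)).
  move: ((m a b - x a b) * (ln nn - 1)) (- ((m a b - mc a b) * ln (K / 4)) + (t1 a b + t3 a b) * ln Lp +
   (tau + th) * (3 * mc a b + 1 / nn) + tau / nn * ln Bb).
  move=> *; lra.
have i0 : ind a b = 0 by rewrite /ind e.
case: (t_off a b i0) => mc0 e1 e2 e3.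
rewrite /Rt i0 mc0 e1 e3.
by rewrite !(mul0r, mulr0, subrr, addr0, add0r, oppr0).
Qed.

Lemma sum_t13 : \sum_a \sum_b (t1 a b + t3 a b) = 2 * X.
Proof.
under eq_bigr do rewrite big_split /=.
rewrite big_split /=.
have -> : \sum_a \sum_b t1 a b = X by apply: eq_bigr => a _; rewrite row_t1.
have -> : \sum_a \sum_b t3 a b = X.
  by rewrite exchange_big /= -sumc; apply: eq_bigr => b _; rewrite col_t3.
by rewrite mulr2n mulrDl mul1r.
Qed.

Lemma sum_ind_sq : \sum_a \sum_b ind a b <= nn * nn.
Proof.
apply: le_trans (ler_sum _ (fun a _ => sum_le_n (ind a) (ind_le1 a))) _.
by rewrite sumr_const card_ord mulr_natl.
Qed.

Lemma sum_zero : \sum_a \sum_b ind a b * ((m a b - x a b) * (ln nn - 1)) = 0.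
Proof.
rewrite big1 // => a _.
transitivity ((\sum_b (ind a b * m a b - x a b)) * (ln nn - 1)).
  rewrite mulr_suml; apply: eq_bigr => b _.
  by rewrite mulrA [ind a b * (_ - _)]mulrBr x_ind.
by rewrite sumrB m_row row_x subrr mul0r.
Qed.

Lemma Lp_ge1 : 1 <= Lp.
Proof.
rewrite /Lp; have : 0 <= 2 / eps by rewrite divr_ge0 // ltW.
move: (2 / eps) => q; move: L0; move: L => l; lra.
Qed.
Lemma Bb_ge1 : 1 <= Bb.
Proof.
rewrite /Bb; have : 0 <= 2 / eps by rewrite divr_ge0 // ltW.
move: (2 / eps) => q; move: K0; move: K => k; lra.
Qed.

Lemma total :
  \sum_a \sum_b ind a b * psi (m a b) - \sum_a \sum_b ind a b * psi (x a b) <=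
  - (Xc * ln (K / 4)) + 2 * X * ln Lp + (tau + th) * (4 * nn) + tau * nn * ln Bb.
Proof.
have H : \sum_a \sum_b ind a b * (psi (m a b) - psi (x a b)) <=
         \sum_a \sum_b (ind a b * ((m a b - x a b) * (ln nn - 1)) + Rt a b).
  by apply: ler_sum => a _; apply: ler_sum => b _; apply: edge_ineq.
have E1 : \sum_a \sum_b ind a b * (psi (m a b) - psi (x a b)) =
  \sum_a \sum_b ind a b * psi (m a b) - \sum_a \sum_b ind a b * psi (x a b).
  rewrite -sumrB; apply: eq_bigr => a _; rewrite -sumrB; apply: eq_bigr => b _.
  by rewrite mulrBr.
have E2 : \sum_a \sum_b (ind a b * ((m a b - x a b) * (ln nn - 1)) + Rt a b) =
  \sum_a \sum_b Rt a b.
  under eq_bigr do rewrite big_split /=.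
  by rewrite big_split /= sum_zero add0r.
rewrite E1 E2 in H; apply: le_trans H _.
rewrite /Rt (dsum4 (fun a b => ind a b * m a b - mc a b) (fun a b => t1 a b + t3 a b)
   (fun a b => 3 * mc a b + ind a b / nn) ind).
rewrite Xc_m sum_t13.
have h3 : \sum_a \sum_b (3 * mc a b + ind a b / nn) <= 4 * nn.
  under eq_bigr do rewrite big_split /=.
  rewrite big_split /=.
  have -> : \sum_a \sum_b 3 * mc a b = 3 * \sum_v \sum_w mc v w.
    by rewrite mulr_sumr; apply: eq_bigr => a _; rewrite mulr_sumr.
  have := sum_mc_le; have := sum_ind_div.
  move: (\sum_v \sum_w mc v w) (\sum_v \sum_w ind v w / nn) => p q; lra.
have th0 : 0 <= tau + th.
  rewrite addr_ge0 //; have [n0|n0] := eqVneq nn 0; first by rewrite /th n0 mulr0 invr0 mulr0.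
  by rewrite /th divr_ge0 ?X_ge0 // mulr_ge0 // ltW.
have h3' : (tau + th) * (\sum_a \sum_b (3 * mc a b + ind a b / nn)) <= (tau + th) * (4 * nn).
  by rewrite ler_wpM2l.
have lB : 0 <= ln Bb by apply: ln_ge0; exact: Bb_ge1.
have h4 : (\sum_a \sum_b ind a b) * (tau / nn * ln Bb) <= tau * nn * ln Bb.
  have [n0|n0] := eqVneq nn 0.
    have : \sum_a \sum_b ind a b <= 0 by have := sum_ind_sq; rewrite n0 mulr0.
    by rewrite n0 !(mulr0, mul0r, invr0).
  apply: le_trans (ler_wpM2r _ sum_ind_sq) _.
    by rewrite mulr_ge0 // divr_ge0 // ler0n.
  by rewrite sq_div.
move: h3' h4.
move: ((tau + th) * (\sum_a \sum_b (3 * mc a b + ind a b / nn))) ((tau + th) * (4 * nn)).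
move: ((\sum_a \sum_b ind a b) * (tau / nn * ln Bb)) (tau * nn * ln Bb).
move: (Xc * ln (K / 4)) (2 * X * ln Lp) => *; lra.
Qed.

Hypothesis hK4 : 2 * ln Lp + 8 / eps <= ln (K / 4).
Hypothesis htQ : tau * (2 * ln Lp + 4 / eps + 4 + ln Bb) <= eps / 2.

Lemma final_bound :
  \sum_a \sum_b ind a b * psi (m a b) - \sum_a \sum_b ind a b * psi (x a b) <= eps * nn / 2.
Proof.
apply: le_trans total _.
have lL : 0 <= ln Lp by apply: ln_ge0; exact: Lp_ge1.
have lB : 0 <= ln Bb by apply: ln_ge0; exact: Bb_ge1.
have hth : th * nn <= X / eps.
  have [n0|n0] := eqVneq nn 0.
    by rewrite n0 mulr0 divr_ge0 ?X_ge0 // ltW.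
  rewrite /th invfM mulrA -mulrA mulVf // mulr1; done.
exact: (final_arith Xc_ge0 X_ge0 eps0 (ler0n _ n) tau0 lL lB X_le hth hK4 htQ).
Qed.

Lemma conclusion (b : R) : Num.max (1 / tau) Bb <= b ->
  exists x0 : weighting n, perfect_fractional_matching G x0 /\ b_normal G b x0 /\
    entropy G x0 >= entropy G m - eps * nn.
Proof.
move=> hb.
have hb1 : 1 / tau <= b by apply: le_trans hb; rewrite le_max lexx.
have hb2 : Bb <= b by apply: le_trans hb; rewrite le_max lexx orbT.
have b0 : 0 < b by apply: lt_le_trans hb1; rewrite divr_gt0.
exists (x); split; [|split].
- split; [|split].
  + by move=> v w e; apply: ltW; apply: x_gt0.
  + by move=> v; rewrite sum_out; under eq_bigr do rewrite x_ind; exact: row_x.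
  + by move=> w; rewrite sum_in; under eq_bigr do rewrite x_ind; exact: col_x.
- move=> v w e; have np := n_gt0 v; split.
  + apply: le_trans (x_ge_tau v w e).
    have h1 : 1 / b <= tau.
      rewrite ler_pdivrMr //; move: hb1; rewrite ler_pdivrMr // mulrC; done.
    rewrite invfM mulrA; rewrite ler_wpM2r // invr_ge0 ltW //.
  + rewrite ler_pdivlMr // mulrC; apply: le_trans (nxB v w e) hb2.
- rewrite !entropy_eq.
  have F := final_bound.
  have l2 := ln2_gt0; have l2' := ln2_ge_half.
  have en0 : 0 <= eps * nn by rewrite mulr_ge0 // ltW.
  have h : eps * nn / 2 <= eps * nn * ln 2.
    by rewrite ler_wpM2l // -div1r.
  have h2 : (\sum_v \sum_w ind v w * psi (m v w) - \sum_v \sum_w ind v w * psi (x v w)) / ln 2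
      <= eps * nn by rewrite ler_pdivrMr //; apply: le_trans F h.
  move: h2; rewrite mulrBl.
  move: (\sum_v \sum_w ind v w * psi (m v w) / ln 2) (\sum_v \sum_w ind v w * psi (x v w) / ln 2) (eps * nn).
  move=> p q u; lra.
Qed.

End Main.

Theorem theorem4p4 :
  forall eps : R, 0 < eps -> eps <= 1 ->
  exists b0 : R, forall b : R, b0 <= b ->
  exists n0 : nat, forall n : nat, (n0 <= n)%N ->
  forall (G : digraph n) (m : weighting n),
    is_neps_digraph eps G ->
    perfect_fractional_matching G m ->
    entropy G m >= n%:R * log2 (n%:R / 2) + eps * n%:R ->
  exists x : weighting n,
    perfect_fractional_matching G x /\ b_normal G b x /\
    entropy G x >= entropy G m - eps * n%:R.
Proof.
move=> eps eps0 heps1.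
set L := 4 / eps.
have L0 : 0 < L by rewrite divr_gt0.
have hLe : 4 <= L * eps by rewrite /L divfK ?gt_eqF.
have lL : 0 <= ln (Lp eps L) by apply: ln_ge0; apply: Lp_ge1.
set E := expR (2 * ln (Lp eps L) + 8 / eps).
set K := 4 * E.
have e8 : 0 <= 8 / eps by rewrite divr_ge0 // ltW.
have E1 : 1 <= E.
  have h := @expR_ge1Dx R (2 * ln (Lp eps L) + 8 / eps).
  have h2 : 0 <= 2 * ln (Lp eps L) by rewrite mulr_ge0.
  rewrite /E; apply: le_trans h; rewrite lerDl; exact: addr_ge0.
have K0 : 0 <= K by rewrite /K mulr_ge0 // expR_ge0.
have K4 : 4 <= K by rewrite /K -[X in X <= _]mulr1 ler_wpM2l.
have K1 : 1 <= K by apply: le_trans K4; rewrite ler1n.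
have hK4 : 2 * ln (Lp eps L) + 8 / eps <= ln (K / 4).
  have -> : K / 4 = E by rewrite /K mulrC mulKf // pnatr_eq0.
  by rewrite /E expRK.
have lB : 0 <= ln (Bb eps K) by apply: ln_ge0; apply: Bb_ge1.
set Q := 2 * ln (Lp eps L) + 4 / eps + 4 + ln (Bb eps K).
have Q0 : 0 <= Q.
  have a1 : 0 <= 2 * ln (Lp eps L) by rewrite mulr_ge0.
  have a2 : 0 <= 4 / eps by rewrite divr_ge0 // ltW.
  rewrite /Q; move: a1 a2 lB; move: (2 * ln (Lp eps L)) (4 / eps) (ln (Bb eps K)) => p q u; lra.
set tau := eps / (2 * Q + 4).
have D0 : 0 < 2 * Q + 4 by apply: pos_aux.
have taup : 0 < tau by rewrite divr_gt0.
have tau0 : 0 <= tau by apply: ltW.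
have htau : tau <= eps / 4 by apply: tau_aux.
have tau1 : tau <= 1 by apply: le_trans htau _; move: heps1 eps0 => *; lra.
have htQ : tau * Q <= eps / 2 by apply: tauQ_aux.
exists (Num.max (1 / tau) (Bb eps K)) => b hb.
exists 0%N => n _ G m hdeg hm hent.
have hXc : Xc n G m K <= eps * n%:R / 4.
  have H : Xc n G m K * ln K <= 2 * n%:R by apply: (@Xc_lnK n G m eps K).
  have X0 : 0 <= Xc n G m K by apply: Xc_ge0.
  have lK : 8 / eps <= ln K.
    have Kp : 0 < K by apply: lt_le_trans K4.
    have K4p : 0 < K / 4 by rewrite divr_gt0.
    have kk : K / 4 <= K by rewrite ler_pdivrMr //; move: Kp; move: (K) => k; lra.
    have h1 : ln (K / 4) <= ln K by rewrite ler_ln ?posrE.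
    have h2 : 0 <= 2 * ln (Lp eps L) by rewrite mulr_ge0.
    move: h1 h2 hK4; move: (ln (K / 4)) (ln K) (2 * ln (Lp eps L)) (8 / eps) => *; lra.
  have H2 : Xc n G m K * (8 / eps) <= 2 * n%:R.
    by apply: le_trans H; apply: ler_wpM2l.
  move: H2; rewrite mulrA ler_pdivrMr // => H2.
  have -> : eps * n%:R / 4 = (2 * n%:R * eps) / 8 by field.
  by rewrite ler_pdivlMr.
by apply: (@conclusion n G m eps K L tau) => //.
Qed.
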